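(* Let $q$ be a prime power and $b,k,t$ positive integers. For the $b$-symbol weight function $wt_b$ on $\mathbb{F}_q^k$, $r_b^{wt_b}(k,t)\ge 2t-b+1$.
   Context: For $\boldsymbol{z}=(z_0,\ldots,z_{n-1}),\boldsymbol{w}\in\mathbb{F}_q^n$, $d_b(\boldsymbol{z},\boldsymbol{w})$ is the number of $i\in\{0,\ldots,n-1\}$ with $(z_i,\ldots,z_{i+b-1})\ne(w_i,\ldots,w_{i+b-1})$ (indices mod $n$), and $wt_b(\boldsymbol{x})=d_b(\boldsymbol{x},\boldsymbol{0})$. A systematic encoding $\mathrm{Enc}(\boldsymbol{x})=(\boldsymbol{x},p(\boldsymbol{x}))\in\mathbb{F}_q^{k+r}$ is a function-correcting $b$-symbol code for $f$ if $d_b(\mathrm{Enc}(\boldsymbol{x}_1),\mathrm{Enc}(\boldsymbol{x}_2))\ge 2t+1$ whenever $f(\boldsymbol{x}_1)\ne f(\boldsymbol{x}_2)$; $r_b^f(k,t)$ is the smallest $r$ for which one exists. The paper's standing assumptions are $2<b<k$ and $t>\lfloor\frac{b-1}{2}\rfloor$. *)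

(* Defs.v *)
From HB Require Import structures.
From mathcomp Require Import all_boot all_order all_algebra all_field.
Set Implicit Arguments. Unset Strict Implicit. Unset Printing Implicit Defensive.
Import GRing.Theory.
Local Open Scope ring_scope.

Definition bsym_dist (F : fieldType) (b : nat) (z w : seq F) : nat :=
  let n := size z in
  count (fun i : nat =>
           has (fun j : nat => nth 0 z ((i + j) %% n) != nth 0 w ((i + j) %% n))
               (iota 0 b))
        (iota 0 n).

Definition bsym_wt (F : fieldType) (b : nat) (x : seq F) : nat :=
  bsym_dist b x (nseq (size x) 0).

Definition sys_enc (F : fieldType) (k r : nat) (p : k.-tuple F -> r.-tuple F)
  (x : k.-tuple F) : seq F := (tval x ++ tval (p x))%SEQ.

Definition is_FCbSC (F : fieldType) (T : eqType) (b t k r : nat)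
  (f : k.-tuple F -> T) (p : k.-tuple F -> r.-tuple F) : Prop :=
  forall x1 x2 : k.-tuple F, f x1 != f x2 ->
    (2 * t + 1 <= bsym_dist b (sys_enc p x1) (sys_enc p x2))%N.

(* Main.v *)
Require Import Defs.
From mathcomp Require Import all_boot all_order all_algebra all_field.
From mathcomp Require Import zify.
Import GRing.Theory.

Theorem mainTheorem19 (F : finFieldType) (b k t r : nat)
  (p : k.-tuple F -> r.-tuple F) :
  (2 < b)%N -> (b < k)%N -> ((b - 1)./2 < t)%N ->
  is_FCbSC b t (fun x : k.-tuple F => bsym_wt b (tval x)) p ->
  (2 * t + 1 - b <= r)%N.
Proof.
move=> hb hbk _ H.
have k0 : (0 < k)%N by lia.
have s1 : size (nseq k (0%R:F)) == k by rewrite size_nseq.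
have s2 : size ((1%R:F) :: nseq k.-1 0%R) == k by rewrite /= size_nseq; lia.
pose x1 := Tuple s1. pose x2 := Tuple s2.
have := H x1 x2.
have w1 : bsym_wt b (tval x1) = 0%N.
  rewrite /bsym_wt /bsym_dist /=; apply/eqP; rewrite eqn0Ngt -has_count.
  apply/hasPn => i _; apply/hasPn => j _; by rewrite !nth_nseq !if_same eqxx.
have w2 : (0 < bsym_wt b (tval x2))%N.
  rewrite /bsym_wt /bsym_dist -has_count; apply/hasP; exists 0%N.
    by rewrite mem_iota /= size_nseq; lia.
  apply/hasP; exists 0%N; first by rewrite mem_iota; lia.
  by rewrite mod0n /= ?nth_nseq ?if_same oner_neq0.
rewrite /= w1 eq_sym -lt0n w2 => /(_ isT).
rewrite /bsym_dist /sys_enc size_cat !size_tuple.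
have -> : (k + r = 1 + ((k - b) + (k + r - (k - b + 1))))%N by lia.
rewrite !iotaD !count_cat.
have -> : count (fun i : nat =>
   has (fun j : nat => nth 0%R (tval x1 ++ tval (p x1)) ((i + j) %% (1 + (k - b + (k + r - (k - b + 1)))))
   != nth 0%R (tval x2 ++ tval (p x2)) ((i + j) %% (1 + (k - b + (k + r - (k - b + 1))))))
   (iota 0 b)) (iota (0 + 1) (k - b)) = 0%N.
  apply/eqP; rewrite eqn0Ngt -has_count; apply/hasPn => i.
  rewrite mem_iota => /andP[hi1 hi2].
  apply/hasPn => j; rewrite mem_iota => /andP[_ hj].
  rewrite modn_small; last by lia.
  rewrite !nth_cat !size_tuple ifT; last by lia.
  rewrite /= nth_nseq if_same.
  case E: (i + j)%N => [|m]; first by lia.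
  rewrite ifT /=; last by lia.
  by rewrite nth_nseq if_same eqxx.
have c1 := count_size (fun i : nat =>
   has (fun j : nat => nth 0%R (tval x1 ++ tval (p x1)) ((i + j) %% (1 + (k - b + (k + r - (k - b + 1)))))
   != nth 0%R (tval x2 ++ tval (p x2)) ((i + j) %% (1 + (k - b + (k + r - (k - b + 1))))))
   (iota 0 b)) (iota 0 1).
have c2 := count_size (fun i : nat =>
   has (fun j : nat => nth 0%R (tval x1 ++ tval (p x1)) ((i + j) %% (1 + (k - b + (k + r - (k - b + 1)))))
   != nth 0%R (tval x2 ++ tval (p x2)) ((i + j) %% (1 + (k - b + (k + r - (k - b + 1))))))
   (iota 0 b)) (iota (0 + 1 + (k - b)) (k + r - (k - b + 1))).
rewrite !size_iota in c1 c2.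
move=> h; move: c1 c2 h.
move: (count _ (iota 0 1)) (count _ (iota (0 + 1 + (k - b)) _)) => A B; lia.
Qed.
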